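(* Let $D\ge1$ and $0\le d\le D$. Let $G=G_1\,\Box\,\cdots\,\Box\,G_D$ be a cartesian product in which exactly $d$ factors are cycle digraphs $C_{n_\mu}$ ($n_\mu\ge3$ arbitrary) and the remaining $D-d$ factors are simple directed paths $P_{n_\mu}$ ($n_\mu\ge2$ arbitrary). Then $$|V|\cdot r-\operatorname{rank}\mathcal D(G)\le r\cdot\prod_{\mu=1}^D\big(\beta_0(G_\mu)+\beta_1(G_\mu)\big)=r\cdot 2^d,$$ equivalently $\dim\ker\mathcal D(G)/r\le 2^d$.
   Context: The cycle digraph $C_n$ ($n\ge3$) has vertex set $\{1,\dots,n\}$ and edges $i\to i+1$ for $1\le i\le n-1$ together with $n\to1$. The simple directed path $P_n$ ($n\ge2$) has vertex set $\{1,\dots,n\}$ and edges $i\to i+1$ for $1\le i\le n-1$. For a directed graph without multiple edges, the anti-symmetrized adjacency matrix $A_{\mathrm{as}}$ is the $|V|\times|V|$ matrix with: - $(A_{\mathrm{as}})_{ij}=1$ if an edge leaves $i$ and enters $j$; - $(A_{\mathrm{as}})_{ij}=-1$ if an edge leaves $j$ and enters $i$; - $(A_{\mathrm{as}})_{ij}=0$ otherwise. Let $\gamma_1,\dots,\gamma_D$ be complex $r\times r$ matrices satisfying $\gamma_\mu\gamma_\nu+\gamma_\nu\gamma_\mu=2\delta_{\mu\nu}\mathbf 1_r$, and set $r=\operatorname{rank}\gamma$. For $G=G_1\Box\cdots\Box G_D$ with $G_\mu$ having $n_\mu$ vertices, $|V|=\prod_\mu n_\mu$ and $$\mathcal D(G)=\sum_{\mu=1}^D\Big(\mathbf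 1_{n_D}\otimes\cdots\otimes\mathbf 1_{n_{\mu+1}}\otimes A_{\mathrm{as}}(G_\mu)\otimes\mathbf 1_{n_{\mu-1}}\otimes\cdots\otimes\mathbf 1_{n_1}\Big)\otimes\gamma_\mu,$$ where $\otimes$ is the Kronecker product and $\mathbf 1_k$ is the $k\times k$ identity. Betti numbers of a factor graph: $\beta_0$ is the number of connected components and $\beta_1=|E|-|V|+\beta_0$. *)

(* Defs.v *)
From HB Require Import structures.
From mathcomp Require Import all_boot all_order all_algebra.
From mathcomp Require Import reals.
From mathcomp Require Export complex mxtens.
Set Implicit Arguments. Unset Strict Implicit. Unset Printing Implicit Defensive.
Import Order.TTheory GRing.Theory Num.Theory.
Local Open Scope ring_scope.

(* A finite directed graph without multiple edges: vertex set 'I_nv,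
   edge set a set of ordered pairs (source, target). *)
Record digraph := Digraph { nv : nat; edges : {set 'I_nv * 'I_nv} }.

(* Cycle digraph C_n on vertices 0..n-1 (= 1..n shifted): edges i -> i+1 mod n. *)
Definition cycle_digraph (n : nat) : digraph :=
  @Digraph n [set e : 'I_n * 'I_n | val e.2 == ((val e.1).+1 %% n)%N].

Definition path_digraph (n : nat) : digraph :=
  @Digraph n [set e : 'I_n * 'I_n | val e.2 == (val e.1).+1 :> nat].

Definition Aas (K : pzRingType) (G : digraph) : 'M[K]_(nv G) :=
  \matrix_(i, j) ((((i, j) \in edges G) : nat)%:R - (((j, i) \in edges G) : nat)%:R).

(* Underlying undirected adjacency (connectivity ignores orientation). *)
Definition und_adj (G : digraph) : rel 'I_(nv G) :=
  fun x y => ((x, y) \in edges G) || ((y, x) \in edges G).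

Definition beta0 (G : digraph) : nat := n_comp (@und_adj G) predT.
(* beta1 = |E| - |V| + beta0 (written so that no truncation occurs). *)
Definition beta1 (G : digraph) : nat := (#|edges G| + beta0 G - nv G)%N.

(* Product of the vertex counts n_0 * ... * n_(k-1), built to match kron_fac. *)
Fixpoint prodn (n : nat -> nat) (k : nat) : nat :=
  match k with 0 => 1%N | k'.+1 => (n k' * prodn n k')%N end.

Fixpoint kron_fac (K : pzRingType) (n : nat -> nat) (A : forall i, 'M[K]_(n i))
  (k : nat) : 'M[K]_(prodn n k) :=
  match k with
  | 0 => 1%:M
  | k'.+1 => A k' *t kron_fac A k'
  end.

(* The operator D(G) for factors G_0,...,G_(D-1) (paper's G_1,...,G_D) and
   gamma matrices gamma_0,...,gamma_(D-1):
   sum_mu (1 (x) ... (x) A_as(G_mu) (x) ... (x) 1) (x) gamma_mu. *)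
Definition dirac (K : pzRingType) (D r : nat) (G : nat -> digraph)
  (gamma : nat -> 'M[K]_r) : 'M[K]_(prodn (fun i => nv (G i)) D * r) :=
  \sum_(mu < D)
     kron_fac (fun i => if i == val mu then @Aas K (G i) else 1%:M) D *t gamma mu.

(* Main.v *)
Require Import Defs.
From HB Require Import structures.
From mathcomp Require Import all_boot all_order all_algebra.
From mathcomp Require Import reals complex mxtens.
From mathcomp Require Import zify.
Set Implicit Arguments. Unset Strict Implicit. Unset Printing Implicit Defensive.
Import Order.TTheory GRing.Theory Num.Theory.
Local Open Scope ring_scope.

Definition vecT (K : pzRingType) p q (F : 'M[K]_(p,q)) : 'rV[K]_(p*q) :=
  \row_k F (mxtens_unindex k).1 (mxtens_unindex k).2.

Lemma sum_tens (K : nmodType) p q (g : 'I_(p*q) -> K) :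
  \sum_(l < p*q) g l = \sum_(i < p) \sum_(j < q) g (mxtens_index (i, j)).
Proof.
rewrite (reindex (@mxtens_index p q)) /=; last first.
  by exists (@mxtens_unindex p q) => x _; [apply: mxtens_indexK|apply: mxtens_unindexK].
by rewrite pair_big /=; apply: eq_bigr => -[].
Qed.

Lemma vecT_mul (K : comPzRingType) p q p' q' (F : 'M[K]_(p,q))
  (X : 'M[K]_(p,p')) (Y : 'M[K]_(q,q')) :
  vecT F *m (X *t Y) = vecT (X^T *m F *m Y).
Proof.
apply/matrixP => i k; case: (mxtens_indexP k) => a b.
rewrite !mxE sum_tens mxtens_indexK /=.
under eq_bigr do under eq_bigr do rewrite !mxE !mxtens_indexK /=.
rewrite exchange_big /=; apply: eq_bigr => j _.
rewrite !mxE mulr_suml; apply: eq_bigr => l _.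
by rewrite !mxE mulrA [F _ _ * _]mulrC.
Qed.

Lemma vecT_inj (K : pzRingType) p q (F : 'M[K]_(p,q)) : vecT F = 0 -> F = 0.
Proof.
move=> H; apply/matrixP => i j.
have := congr1 (fun v : 'rV_(p*q) => v 0 (mxtens_index (i,j))) H.
by rewrite !mxE mxtens_indexK.
Qed.

Lemma vecT_surj (K : pzRingType) p q (u : 'rV[K]_(p*q)) :
  exists F : 'M_(p,q), u = vecT F.
Proof.
exists (\matrix_(i,j) u 0 (mxtens_index (i,j))).
apply/matrixP => i k; rewrite !mxE ord1 /=.
by rewrite -{1}[k]mxtens_unindexK.
Qed.

Lemma core_sub (F : fieldType) n m s (A : 'M[F]_n) (W : 'M[F]_(s,m))
  (V : 'M[F]_(n,m)) : A^T *m V = 0 -> (V <= W)%MS ->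
  (vecT V <= row_base (kermx A) *t W)%MS.
Proof.
move=> hA hW.
have : (V^T <= row_base (kermx A))%MS.
  by rewrite eq_row_base sub_kermx -[A]trmxK -trmx_mul hA trmx0.
case/submxP => C hC.
have -> : V = (row_base (kermx A))^T *m (C^T *m pinvmx W) *m W.
  by rewrite [_ *m (_ *m _)]mulmxA -trmx_mul -hC trmxK mulmxKpV.
by rewrite -vecT_mul submxMl.
Qed.

Lemma tens11 (K : pzRingType) a b :
  (1%:M : 'M[K]_a) *t (1%:M : 'M[K]_b) = 1%:M.
Proof.
apply/matrixP => i j.
case: (mxtens_indexP i) => i1 i2; case: (mxtens_indexP j) => j1 j2.
rewrite tensmxE !mxE -natrM mulnb (inj_eq (can_inj (@mxtens_indexK a b))).
by rewrite xpair_eqE.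
Qed.

Lemma tensmxDl (K : pzRingType) m n p q (A B : 'M[K]_(m,n)) (C : 'M[K]_(p,q)) :
  (A + B) *t C = A *t C + B *t C.
Proof. by apply/matrixP => i j; rewrite !mxE mulrDl. Qed.

Lemma tensmxDr (K : pzRingType) m n p q (A : 'M[K]_(m,n)) (B C : 'M[K]_(p,q)) :
  A *t (B + C) = A *t B + A *t C.
Proof. by apply/matrixP => i j; rewrite !mxE mulrDr. Qed.

Lemma tensmxNl (K : pzRingType) m n p q (A : 'M[K]_(m,n)) (C : 'M[K]_(p,q)) :
  (- A) *t C = - (A *t C).
Proof. by apply/matrixP => i j; rewrite !mxE mulNr. Qed.

Lemma tensmxNr (K : pzRingType) m n p q (A : 'M[K]_(m,n)) (C : 'M[K]_(p,q)) :
  A *t (- C) = - (A *t C).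
Proof. by apply/matrixP => i j; rewrite !mxE mulrN. Qed.

Lemma tensmx_suml (K : pzRingType) m n p q I (r : seq I) (P : pred I)
  (A : I -> 'M[K]_(m,n)) (C : 'M[K]_(p,q)) :
  (\sum_(i <- r | P i) A i) *t C = \sum_(i <- r | P i) (A i *t C).
Proof.
by apply: (big_morph (fun X => X *t C)) => [X Y|]; rewrite ?tensmxDl ?tens0mx.
Qed.

Lemma tensmx_sumr (K : pzRingType) m n p q I (r : seq I) (P : pred I)
  (A : 'M[K]_(m,n)) (C : I -> 'M[K]_(p,q)) :
  A *t (\sum_(i <- r | P i) C i) = \sum_(i <- r | P i) (A *t C i).
Proof.
by apply: (big_morph (fun X => A *t X)) => [X Y|]; rewrite ?tensmxDr ?tensmx0.
Qed.

Section KronFac.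
Variable n : nat -> nat.

Lemma kron_fac_ext (K : pzRingType) (A B : forall i, 'M[K]_(n i)) k :
  (forall i, (i < k)%N -> A i = B i) -> kron_fac A k = kron_fac B k.
Proof.
elim: k => [//|k IH] H /=; rewrite H // IH // => i hi; apply: H; exact: ltnW.
Qed.

Lemma kron_fac1 (K : pzRingType) k :
  kron_fac (fun i => (1%:M : 'M[K]_(n i))) k = 1%:M.
Proof. by elim: k => [//|k IH] /=; rewrite IH tens11. Qed.

Lemma kron_fac_mul (K : comPzRingType) (A B : forall i, 'M[K]_(n i)) k :
  kron_fac A k *m kron_fac B k = kron_fac (fun i => A i *m B i) k.
Proof. by elim: k => [|k IH] /=; rewrite ?mulmx1 // tensmx_mul IH. Qed.

Lemma kron_fac_tr (K : pzRingType) (A : forall i, 'M[K]_(n i)) k :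
  (kron_fac A k)^T = kron_fac (fun i => (A i)^T) k.
Proof. by elim: k => [|k IH] /=; rewrite ?trmx1 // trmx_tens IH. Qed.

Lemma kron_fac_map (K K' : pzRingType) (f : {rmorphism K -> K'})
  (A : forall i, 'M[K]_(n i)) k :
  map_mx f (kron_fac A k) = kron_fac (fun i => map_mx f (A i)) k.
Proof. by elim: k => [|k IH] /=; rewrite ?map_mx1 // map_mxT IH. Qed.

Definition Xm (K : pzRingType) (A : forall i, 'M[K]_(n i)) k mu :=
  kron_fac (fun i => if i == mu then A i else 1%:M) k.

End KronFac.

Lemma ker_tens1 (F : fieldType) m r (M : 'M[F]_m) :
  (\rank (kermx (M *t (1%:M : 'M[F]_r))) <= (m - \rank M) * r)%N.
Proof.
rewrite -mxrank_ker.
apply: leq_trans (rank_leq_row (row_base (kermx M) *t (1%:M : 'M[F]_r))).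
apply: mxrankS; apply/row_subP => i.
have : row i (kermx (M *t 1%:M)) *m (M *t 1%:M) = 0.
  by apply/eqP; rewrite -sub_kermx row_sub.
case: (vecT_surj (row i (kermx (M *t (1%:M : 'M[F]_r))))) => V ->.
rewrite vecT_mul mulmx1 => /vecT_inj hV.
by apply: core_sub => //; apply: submx1.
Qed.

Lemma Xm_comm (K : comPzRingType) n (A : forall i, 'M[K]_(n i)) k mu nu :
  Xm A k mu *m Xm A k nu = Xm A k nu *m Xm A k mu.
Proof.
rewrite /Xm !kron_fac_mul; apply: kron_fac_ext => i _.
by case: (i == mu); case: (i == nu); rewrite ?mulmx1 ?mul1mx.
Qed.

Lemma sq_gen (K : fieldType) n r D (A : forall i, 'M[K]_(n i))
  (gamma : nat -> 'M[K]_r) :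
  (2%:R != 0 :> K) ->
  (forall mu nu, (mu < D)%N -> (nu < D)%N ->
     gamma mu *m gamma nu + gamma nu *m gamma mu = ((mu == nu)%:R *+ 2)%:M) ->
  (\sum_(mu < D) Xm A D mu *t gamma mu) *m (\sum_(mu < D) Xm A D mu *t gamma mu)
  = (\sum_(mu < D) Xm A D mu *m Xm A D mu) *t 1%:M.
Proof.
move=> h2 hg; set S := \sum_(mu < D) _.
have E : S *m S = \sum_(mu < D) \sum_(nu < D)
    (Xm A D mu *m Xm A D nu) *t (gamma mu *m gamma nu).
  rewrite mulmx_suml; apply: eq_bigr => mu _; rewrite mulmx_sumr.
  by apply: eq_bigr => nu _; rewrite tensmx_mul.
have E2 : S *m S = \sum_(mu < D) \sum_(nu < D)
    (Xm A D mu *m Xm A D nu) *t (gamma nu *m gamma mu).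
  rewrite E exchange_big; apply: eq_bigr => mu _; apply: eq_bigr => nu _.
  by rewrite Xm_comm.
apply: (@scalerI _ _ (2%:R)) => //.
rewrite !scaler_nat mulr2n {1}E E2 -big_split /=.
rewrite mulr2n -tensmxDr tensmx_suml; apply: eq_bigr => mu _.
rewrite -big_split /= (bigD1 mu) //= big1 => [|nu hnu].
  by rewrite addr0 -tensmxDr hg // eqxx mulr2n raddfD.
rewrite -tensmxDr hg //.
have -> : (val mu == val nu) = false by apply/negbTE; rewrite val_eqE eq_sym.
by rewrite mul0rn raddf0 tensmx0.
Qed.

Lemma ker_sumsq (R : realFieldType) N D (X : 'I_D -> 'M[R]_N) :
  (forall mu, (X mu)^T = - X mu) ->
  (kermx (\sum_mu X mu *m X mu) <= \bigcap_(mu < D) kermx (X mu))%MS.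
Proof.
move=> hX; apply/sub_bigcapmxP => mu _; rewrite sub_kermx.
apply/eqP/row_matrixP => i; rewrite row_mul row0.
set L := \sum_mu _; set u := row i (kermx L).
have hu : u *m L = 0 by apply/eqP; rewrite -sub_kermx row_sub.
have key nu : u *m X nu *m X nu *m u^T
    = - ((u *m X nu) *m (u *m X nu)^T).
  by rewrite trmx_mul hX mulNmx mulmxN opprK !mulmxA.
have S0 : \sum_nu \sum_j ((u *m X nu) 0 j)^+2 = 0.
  have : (u *m L *m u^T) 0 0 = 0 by rewrite hu mul0mx mxE.
  rewrite mulmx_sumr mulmx_suml summxE => H.
  apply/eqP; rewrite -oppr_eq0 -sumrN; apply/eqP; rewrite -[RHS]H.
  apply: congr_big => // nu _; rewrite mulmxA key mxE mxE -sumrN.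
  by rewrite -sumrN; apply: eq_bigr => j _; rewrite !mxE expr2.
have S1 := psumr_eq0P (fun nu _ => sumr_ge0 _ (fun j _ => sqr_ge0 _)) S0.
apply/rowP => j; rewrite [RHS]mxE.
have S2 := psumr_eq0P (fun j _ => sqr_ge0 _) (S1 mu isT).
by apply/eqP; rewrite -sqrf_eq0 S2.
Qed.

Section CKsec.
Variables (R : fieldType) (n : nat -> nat) (A : forall i, 'M[R]_(n i)).

Definition CK k : 'M[R]_(prodn n k) := (\bigcap_(mu < k) kermx (Xm A k mu))%MS.

Lemma CK_rank k : (\rank (CK k) <= \prod_(mu < k) (n mu - \rank (A mu)))%N.
Proof.
elim: k => [|k IH]; first by rewrite big_ord0; exact: rank_leq_col.
have sub : (CK k.+1 <= row_base (kermx (A k)) *t row_base (CK k))%MS.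
  apply/row_subP => i; set u := row i (CK k.+1).
  have hu (mu : 'I_k.+1) : u *m Xm A k.+1 mu = 0.
    apply/eqP; rewrite -sub_kermx.
    by move: (row_sub i (CK k.+1)) => /sub_bigcapmxP /(_ mu isT).
  case: (vecT_surj u) => V hV; rewrite hV; apply: core_sub.
    have := hu ord_max; rewrite /Xm /= eqxx.
    rewrite (@kron_fac_ext n R _ (fun i => 1%:M)); last first.
      by move=> t ht; rewrite ltn_eqF.
    by rewrite kron_fac1 hV vecT_mul mulmx1 => /vecT_inj.
  rewrite eq_row_base; apply/row_subP => j; apply/sub_bigcapmxP => mu _.
  rewrite sub_kermx.
  have := hu (widen_ord (leqnSn k) mu); rewrite /Xm /= gtn_eqF //.
  by rewrite hV vecT_mul trmx1 mul1mx => /vecT_inj hVm; rewrite -row_mul hVm row0.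
apply: leq_trans (mxrankS sub) _; apply: leq_trans (rank_leq_row _) _.
by rewrite mxrank_ker big_ord_recr /= mulnC leq_mul.
Qed.

End CKsec.

Lemma rank_lb (F : fieldType) (G : digraph) m (f g : 'I_m -> 'I_(nv G)) :
  (forall i j, Aas F G (f i) (g j)
     = (i == j)%:R - ((val i == (val j).+2) : nat)%:R) ->
  (m <= \rank (Aas F G))%N.
Proof.
move=> hA; set A := Aas F G.
have le1 : (\rank (mxsub f g A) <= \rank A)%N.
  have e : mxsub f g A = rowsub f 1%:M *m (A *m colsub g 1%:M).
    by rewrite mulmx_colsub mulmx1 -mxsub_mul mul1mx.
  rewrite e; exact: leq_trans (mxrankM_maxr _ _) (mxrankM_maxl _ _).
apply: leq_trans le1; rewrite mxrank_unit //.
have trig : is_trig_mx (mxsub f g A).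
  apply/is_trig_mxP => i j hij; rewrite mxE hA.
  have h1 : (i == j) = false by apply/negbTE; rewrite neq_ltn hij.
  have h2 : (val i == (val j).+2) = false.
    by apply/negbTE; rewrite neq_ltn; apply/orP; left; apply: ltn_trans hij _.
  by rewrite h1 h2 subr0.
rewrite unitmxE det_trig // big1 ?unitr1 // => i _.
have h2 : (val i == (val i).+2) = false by apply/negbTE; rewrite neq_ltn ltnW.
by rewrite mxE hA eqxx h2 subr0.
Qed.
Lemma beta0_conn (G : digraph) (h0 : (0 < nv G)%N) :
  (forall k (hk : (k.+1 < nv G)%N), (Ordinal (ltnW hk), Ordinal hk) \in edges G) ->
  beta0 G = 1%N.
Proof.
move=> hE; rewrite /beta0.
have sym : connect_sym (@und_adj G).
  by apply: sym_connect_sym => x y; rewrite /und_adj orbC.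
have conn : forall k (hk : (k < nv G)%N), connect (@und_adj G) (Ordinal h0) (Ordinal hk).
  elim=> [|k IH] hk; first by rewrite (_ : Ordinal hk = Ordinal h0) ?connect0 //; apply: val_inj.
  apply: connect_trans (IH (ltnW hk)) (connect1 _).
  by rewrite /und_adj hE.
rewrite -(n_comp_connect sym (Ordinal h0)); apply: eq_n_comp_r => x.
rewrite !inE; symmetry.
by case: x => k hk; rewrite (conn k hk).
Qed.

Lemma card_graph n (S : {set 'I_n * 'I_n}) (h : 'I_n -> 'I_n) (A : {set 'I_n}) :
  (forall a b, ((a,b) \in S) = (a \in A) && (b == h a)) -> #|S| = #|A|.
Proof.
move=> hS.
have -> : S = [set (a, h a) | a in A].
  apply/setP => -[a b]; rewrite hS; apply/andP/imsetP.
    by case=> ha /eqP ->; exists a.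
  by case=> x hx [-> ->].
by apply: card_imset => x y [].
Qed.

Lemma path_facts (F : fieldType) n : (2 <= n)%N ->
  (beta0 (path_digraph n) + beta1 (path_digraph n) = 1)%N /\
  (n - \rank (Aas F (path_digraph n)) <= 1)%N.
Proof.
case: n => [|m] // hm.
have b0 : beta0 (path_digraph m.+1) = 1%N.
  by apply: beta0_conn => // k hk; rewrite inE.
have ce : #|edges (path_digraph m.+1)| = m.
  rewrite (@card_graph _ _ (fun a => inord a.+1) [set~ ord_max]).
    by rewrite cardsC1 card_ord.
  move=> a b; rewrite !inE /=.
  apply/eqP/andP.
    move=> hb; split.
      by rewrite -val_eqE /= neq_ltn -ltnS -hb ltn_ord.
    by apply/eqP/val_inj; rewrite /= inordK // -hb.
  case=> ha /eqP ->; rewrite inordK //.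
  by move: ha (ltn_ord a); rewrite -val_eqE /= => /eqP ha hlt; lia.
split; first by rewrite /beta1 b0 ce addn1 subnn.
have : (m <= \rank (Aas F (path_digraph m.+1)))%N.
  apply: (@rank_lb F (path_digraph m.+1) m (widen_ord (leqnSn m)) (lift ord0)).
  move=> i j; rewrite mxE !inE /= /bump /= add1n eqSS.
  by rewrite eq_sym.
move=> hr; lia.
Qed.

Lemma cycle_facts (F : fieldType) n : (3 <= n)%N ->
  (beta0 (cycle_digraph n) + beta1 (cycle_digraph n) = 2)%N /\
  (n - \rank (Aas F (cycle_digraph n)) <= 2)%N.
Proof.
case: n => [|[|[|m]]] // _.
have b0 : beta0 (cycle_digraph m.+3) = 1%N.
  by apply: beta0_conn => // k hk; rewrite inE /= modn_small.
have ce : #|edges (cycle_digraph m.+3)| = m.+3.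
  rewrite (@card_graph _ _ (fun a => inord (a.+1 %% m.+3)) [set: 'I_m.+3]).
    by rewrite cardsT card_ord.
  move=> a b; rewrite !inE /=.
  apply/eqP/eqP => [hb|->]; first by apply/val_inj; rewrite /= inordK // -hb.
  by rewrite inordK // ltn_mod.
split; first by rewrite /beta1 b0 ce addn1 subSnn.
have : (m.+1 <= \rank (Aas F (cycle_digraph m.+3)))%N.
  apply: (@rank_lb F (cycle_digraph m.+3) m.+1
     (widen_ord (leq_trans (leqnSn _) (leqnSn _))) (lift ord0 \o widen_ord (leqnSn _))).
  move=> i j; rewrite mxE !inE /= /bump /= add1n.
  have hi := ltn_ord i; have hj := ltn_ord j.
  rewrite (modn_small (_ : i.+1 < m.+3)%N) ?(modn_small (_ : j.+2 < m.+3)%N);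
    try lia.
  by rewrite eqSS eq_sym.
move=> hr; lia.
Qed.

Lemma Aas_tr (K : pzRingType) (G : digraph) : (Aas K G)^T = - Aas K G.
Proof. by apply/matrixP => i j; rewrite !mxE opprB. Qed.

Lemma Xm_tr (K : pzRingType) n (A : forall i, 'M[K]_(n i)) k mu :
  (forall i, (A i)^T = - A i) ->
  (Xm A k mu)^T = if (mu < k)%N then - Xm A k mu else Xm A k mu.
Proof.
move=> hA; elim: k => [|k IH]; first by rewrite /Xm /= trmx1.
rewrite /Xm /= trmx_tens -/(Xm A k mu) IH.
case: (ltngtP mu k) => h.
- have e2 : (mu < k.+1)%N by apply: (ltn_trans h).
  by rewrite e2 trmx1 tensmxNr.
- have e2 : (mu < k.+1)%N = false by apply/negbTE; rewrite -leqNgt.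
  by rewrite e2 trmx1.
- by rewrite h ltnSn hA tensmxNl.
Qed.

Lemma prod_count D (P : nat -> bool) :
  (\prod_(mu < D) (if P mu then 2 else 1) = 2 ^ count P (iota 0 D))%N.
Proof.
elim: D => [|D IH]; first by rewrite big_ord0.
have -> : iota 0 D.+1 = iota 0 D ++ [:: D] by rewrite -addn1 iotaD.
rewrite big_ord_recr /= IH count_cat /= expnD.
by case: (P D); rewrite ?muln1 ?expn1.
Qed.

Unset Implicit Arguments.
Theorem theorem6 (R : realType) (D d r : nat) (G : nat -> digraph)
  (is_cycle : nat -> bool) (gamma : nat -> 'M[complex R]_r) :
  (1 <= D)%N ->
  (forall mu, (mu < D)%N ->
     if is_cycle mu then exists n, (3 <= n)%N /\ G mu = cycle_digraph n
     else exists n, (2 <= n)%N /\ G mu = path_digraph n) ->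
  d = count is_cycle (iota 0 D) ->
  (forall mu nu, (mu < D)%N -> (nu < D)%N ->
     gamma mu *m gamma nu + gamma nu *m gamma mu = ((mu == nu)%:R *+ 2)%:M) ->
  ((prodn (fun i => nv (G i)) D * r - \rank (dirac D G gamma))
     <= r * \prod_(mu < D) (beta0 (G mu) + beta1 (G mu)))%N
  /\ (\prod_(mu < D) (beta0 (G mu) + beta1 (G mu)) = 2 ^ d)%N.
Proof.
move=> _ hG hd hg.
have facts (mu : 'I_D) :
    (beta0 (G mu) + beta1 (G mu) = if is_cycle mu then 2 else 1)%N /\
    (nv (G mu) - \rank (Aas R (G mu)) <= beta0 (G mu) + beta1 (G mu))%N.
  move: (hG mu (ltn_ord mu)); case: (is_cycle mu) => -[n [hn ->]].
    by have [-> h2] := @cycle_facts R n hn.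
  by have [-> h2] := @path_facts R n hn.
have hprod : (\prod_(mu < D) (beta0 (G mu) + beta1 (G mu)) = 2 ^ d)%N.
  by rewrite hd -prod_count; apply: eq_bigr => mu _; case: (facts mu).
split => //.
set K := complex R.
pose f : {rmorphism R -> K} := real_complex R.
pose Ar := fun i => Aas R (G i).
pose Ac := fun i => Aas K (G i).
have hAc i : Ac i = map_mx f (Ar i).
  by apply/matrixP => a b; rewrite !mxE rmorphB !rmorph_nat.
have hXc mu : Xm Ac D mu = map_mx f (Xm Ar D mu).
  rewrite /Xm kron_fac_map; apply: kron_fac_ext => i _.
  by case: (i == mu); rewrite ?hAc ?map_mx1.
set L := \sum_(mu < D) Xm Ar D mu *m Xm Ar D mu.
have hLc : \sum_(mu < D) Xm Ac D mu *m Xm Ac D mu = map_mx f L.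
  rewrite /L (big_morph (map_mx f) (@map_mxD _ _ f _ _) (@map_mx0 _ _ f _ _)).
  by apply: eq_bigr => mu _; rewrite !hXc map_mxM.
have h2 : (2%:R != 0 :> K).
  by rewrite -(rmorph_nat f) fmorph_eq0 pnatr_eq0.
have D2 : dirac D G gamma *m dirac D G gamma = map_mx f L *t 1%:M.
  by rewrite -hLc; exact: (@sq_gen K (fun i => nv (G i)) r D Ac gamma h2 hg).
set N := prodn (fun i => nv (G i)) D.
have s1 : (\rank (map_mx f L *t (1%:M : 'M[K]_r)) <= \rank (dirac D G gamma))%N.
  by rewrite -D2 mxrankM_maxl.
have s2 : (N * r - \rank (map_mx f L *t (1%:M : 'M[K]_r)) <= (N - \rank L) * r)%N.
  by rewrite -mxrank_ker -(mxrank_map f L); apply: ker_tens1.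
have s3 : (N - \rank L <= \prod_(mu < D) (nv (G mu) - \rank (Ar mu)))%N.
  rewrite -mxrank_ker; apply: leq_trans (CK_rank Ar D); apply: mxrankS.
  apply: (@ker_sumsq R N D (fun mu => Xm Ar D mu)) => mu.
  by rewrite Xm_tr ?ltn_ord // => i; apply: Aas_tr.
have s4 : (\prod_(mu < D) (nv (G mu) - \rank (Ar mu))
           <= \prod_(mu < D) (beta0 (G mu) + beta1 (G mu)))%N.
  by apply: leq_prod => mu _; case: (facts mu).
apply: leq_trans (leq_sub2l _ s1) _.
apply: leq_trans s2 _; rewrite [X in (_ <= X)%N]mulnC leq_mul2r; apply/orP; right.
exact: leq_trans s3 s4.
Qed.
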